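(* Let $p$ be a prime and let $G$ be a nontrivial finite $p$-group. Then there exists an element $z\in G$ of order $p$ such that $|I_{\mathcal C}(z)|=n_G$.
   Context: For a finite group $G$ and $x\in G$, let $I_{\mathcal C}(x)=\{y\in G : \langle x,y\rangle \text{ is cyclic}\}$. For a nontrivial finite group $G$, $n_G=\max\{|I_{\mathcal C}(x)| : x\in G\setminus\{1\}\}$. *)

(* Defs.v *)
From mathcomp Require Import all_boot all_fingroup all_solvable.
From mathcomp Require Import pgroup cyclic.
Set Implicit Arguments. Unset Strict Implicit. Unset Printing Implicit Defensive.
Local Open Scope group_scope.

Definition cyclicizer (gT : finGroupType) (G : {set gT}) (x : gT) : {set gT} :=
  [set y in G | cyclic <<[set x; y]>>].

Definition nG (gT : finGroupType) (G : {set gT}) : nat :=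
  \max_(x in G^#) #|cyclicizer G x|.

(* Main.v *)
Require Import Defs.
From mathcomp Require Import all_boot all_fingroup all_solvable.
From mathcomp Require Import pgroup cyclic.
Local Open Scope group_scope.

Theorem lemma2p1 (gT : finGroupType) (G : {group gT}) (p : nat) :
  prime p -> pgroup p G -> G :!=: 1%g ->
  exists2 z, z \in G & (#[z]%g = p /\ #|cyclicizer G z| = nG G).
Proof.
move=> pr pG ntG.
have: 0 < #|G^#|.
  case/trivgPn: ntG => y yG ny1; apply/card_gt0P; exists y.
  by rewrite !inE ny1.
case/(eq_bigmax_cond (fun x => #|cyclicizer G x|)) => x.
rewrite !inE => /andP [nx1 xG] Hmax.
have: p.-nat #[x] by have := mem_p_elt pG xG.
case/p_natP => k ox.
have k0 : 0 < k.
  case: k ox => // ox; move: nx1; by rewrite -order_eq1 ox expn0 eqxx.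
have pdx : p %| #[x] by rewrite ox; apply: dvdn_exp.
have ddx : #[x] %/ p %| #[x] by apply: dvdn_div.
set z := x ^+ (#[x] %/ p).
have oz : #[z] = p.
  rewrite /z orderXdiv //.
  have m0 : 0 < #[x] %/ p by rewrite divn_gt0 ?prime_gt0 // dvdn_leq.
  by rewrite -{1}(divnK pdx) mulKn.
exists z; first by rewrite groupX.
split=> //.
apply/eqP; rewrite eqn_leq; apply/andP; split.
  rewrite /nG; apply: leq_bigmax_cond.
  by rewrite !inE -order_eq1 oz groupX // andbT; case: eqP pr => // ->.
rewrite /nG Hmax; apply: subset_leq_card; apply/subsetP => y.
rewrite !inE => /andP [yG cy]; rewrite yG /=.
apply: cyclicS cy; rewrite gen_subG; apply/subsetP => w.
rewrite !inE => /orP [/eqP -> | /eqP ->].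
  by rewrite groupX // mem_gen // !inE eqxx.
by rewrite mem_gen // !inE eqxx orbT.
Qed.
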